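(* Let $G=(V,E)$ be a finite simple undirected graph, $G_0:=G$, and let $W_1,\dots,W_r$ be distinct subsets of $V$ such that for every $t\in\{1,\dots,r\}$, $W_t$ is a clique of $G_{t-1}$ with $|W_t|\ge2$ and $G_t:=G_{t-1}\mid W_t$. Let $F_0:=STAB(G)$ and $F_t:=\{x\in STAB(G)\mid x_{W_j}=1,\ j=1,\dots,t\}$ for $t\in\{1,\dots,r\}$. Then $F_t\subseteq STAB(G_t)$ for all $t\in\{0,\dots,r\}$.
   Context: For a graph $G=(V,E)$, $\mathcal S(G)\subseteq\{0,1\}^V$ is the set of characteristic vectors of stable sets of $G$, and $STAB(G)=\mathrm{conv}\,\mathcal S(G)$. For $W\subseteq V$ and $x\in\mathbb R^V$, $x_W=\sum_{v\in W}x_v$. The clique projection of a clique $W$ ($|W|\ge2$) of a graph $H=(V,E_H)$ is $H\mid W=(V,E_H\cup\{uv\notin E_H\mid u\ne v,\ W\subseteq N_H(u)\cup N_H(v)\})$, where $N_H(u)$ is the neighborhood of $u$ in $H$. *)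

(* Defs.v *)
From mathcomp Require Import all_boot all_order all_algebra.
Set Implicit Arguments. Unset Strict Implicit. Unset Printing Implicit Defensive.
Import Order.TTheory GRing.Theory Num.Theory.
Local Open Scope ring_scope.

(* A finite simple graph on the finite vertex type T is given by its
   adjacency relation e : rel T (assumed symmetric and irreflexive). *)

Definition nbhd (T : finType) (e : rel T) (u : T) : {set T} := [set w | e u w].

Definition is_clique (T : finType) (e : rel T) (W : {set T}) : Prop :=
  forall u v, u \in W -> v \in W -> u != v -> e u v.

Definition stable (T : finType) (e : rel T) (S : {set T}) : bool :=
  [forall u in S, forall v in S, ~~ e u v].

Definition clique_proj (T : finType) (e : rel T) (W : {set T}) : rel T :=
  fun u v => e u v || ((u != v) && (W \subset nbhd e u :|: nbhd e v)).

Definition proj_seq (T : finType) (e : rel T) (Ws : seq {set T}) : rel T :=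
  foldl (@clique_proj T) e Ws.

Definition chi (R : realFieldType) (T : finType) (S : {set T}) : T -> R :=
  fun v => (v \in S)%:R.

Arguments chi R {T} S v.
Definition STAB (R : realFieldType) (T : finType) (e : rel T) : (T -> R) -> Prop :=
  fun x => exists lambda : {set T} -> R,
    (forall S, 0 <= lambda S) /\
    \sum_(S | stable e S) lambda S = 1 /\
    (forall v, x v = \sum_(S | stable e S) lambda S * chi R S v).
Arguments STAB R {T} e x.

Definition xsum (R : realFieldType) (T : finType) (x : T -> R) (W : {set T}) : R :=
  \sum_(v in W) x v.

Definition Fface (R : realFieldType) (T : finType) (e : rel T)
    (Ws : seq {set T}) (t : nat) : (T -> R) -> Prop :=
  fun x => STAB R e x /\ (forall j, (j < t)%N -> xsum x (nth set0 Ws j) = 1).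

(* Main.v *)
Require Import Defs.
From mathcomp Require Import all_boot all_order all_algebra.
Import Order.TTheory GRing.Theory Num.Theory.
Local Open Scope ring_scope.

Lemma stableP (T : finType) (e : rel T) (S : {set T}) :
  stable e S <-> forall u v, u \in S -> v \in S -> ~~ e u v.
Proof.
split.
- move/forall_inP=> H u v hu hv; move/forall_inP: (H u hu); exact.
- move=> H; apply/forall_inP=> u hu; apply/forall_inP=> v hv; exact: H.
Qed.

Lemma proj_mono (T : finType) (Ws : seq {set T}) (e : rel T) u v :
  e u v -> proj_seq e Ws u v.
Proof.
elim: Ws e => [|W Ws IH] e h //=.
apply: IH; by rewrite /clique_proj h.
Qed.

Lemma proj_step (T : finType) (e : rel T) (Ws : seq {set T}) k :
  (k < size Ws)%N ->
  proj_seq e (take k.+1 Ws) = clique_proj (proj_seq e (take k Ws)) (nth set0 Ws k).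
Proof. by move=> hk; rewrite (take_nth set0) // /proj_seq foldl_rcons. Qed.

Lemma sum_chi (R : realFieldType) (T : finType) (S W : {set T}) :
  \sum_(v in W) chi R S v = (#|S :&: W|)%:R.
Proof.
rewrite /chi -natr_sum; congr (_ %:R).
rewrite -sum1_card (big_mkcond (fun v => v \in S :&: W)) /=.
rewrite (big_mkcond (fun v => v \in W)) /=.
apply: eq_bigr => v _; rewrite inE.
by case: (v \in W); case: (v \in S).
Qed.

Lemma sum_restrict (R : realFieldType) (T : finType) (e e' : rel T)
  (g : {set T} -> R) :
  (forall S, stable e' S -> stable e S) ->
  (forall S, stable e S -> ~~ stable e' S -> g S = 0) ->
  \sum_(S | stable e' S) g S = \sum_(S | stable e S) g S.
Proof.
move=> h1 h2.
rewrite (bigID (fun S => stable e' S) (fun S => stable e S)) /=.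
rewrite [X in _ = _ + X]big1 ?addr0; last by move=> S /andP[] /h2.
apply: eq_bigl => S; case h: (stable e' S); last by rewrite andbF.
by rewrite (h1 _ h).
Qed.

Theorem lemma5 (R : realFieldType) (T : finType) (e : rel T)
  (e_sym : symmetric e) (e_irr : irreflexive e)
  (Ws : seq {set T}) (Ws_uniq : uniq Ws)
  (Ws_clique : forall t, (t < size Ws)%N ->
      is_clique (proj_seq e (take t Ws)) (nth set0 Ws t) /\
      (2 <= #|nth set0 Ws t|)%N) :
  forall t, (t <= size Ws)%N ->
    forall x : T -> R, Fface e Ws t x -> STAB R (proj_seq e (take t Ws)) x.
Proof.
move=> t ht x [[lam [lam0 [lam1 xdef]]] xW].
have claim : forall k, (k <= t)%N -> forall S, stable e S -> lam S != 0 ->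
    stable (proj_seq e (take k Ws)) S.
  elim=> [|k IH] hk S hS hl; first by rewrite take0.
  have hkt : (k < t)%N by [].
  have hks : (k < size Ws)%N by apply: leq_trans ht.
  rewrite proj_step //.
  pose e' := proj_seq e (take k Ws).
  set W := nth set0 Ws k.
  have IHk := IH (ltnW hk).
  have [hcl _] := Ws_clique k hks.
  have le1 : forall S', stable e S' -> lam S' != 0 -> (#|S' :&: W| <= 1)%N.
    move=> S' hS' hl'; rewrite leqNgt; apply/negP=> /card_gt1P [u [v [hu hv huv]]].
    move: hu hv; rewrite !inE => /andP[uS uW] /andP[vS vW].
    have := (proj1 (stableP _ _ _)) (IHk S' hS' hl') u v uS vS.
    by rewrite (hcl u v uW vW huv).
  have eq0 : \sum_(S' | stable e S') lam S' * (1 - (#|S' :&: W|)%:R) = 0.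
    have hx : xsum x W = 1 by apply: xW.
    move: hx; rewrite /xsum.
    under eq_bigr => v _ do rewrite xdef.
    rewrite exchange_big /=.
    under eq_bigr => S' _ do rewrite -mulr_sumr sum_chi.
    move=> hx.
    under eq_bigr => S' _ do rewrite mulrBr mulr1.
    by rewrite sumrB lam1 hx subrr.
  have nonneg : forall S', stable e S' -> 0 <= lam S' * (1 - (#|S' :&: W|)%:R).
    move=> S' hS'; case: (eqVneq (lam S') 0) => [->|hl']; first by rewrite mul0r.
    apply: mulr_ge0 => //; rewrite subr_ge0 lern1; exact: le1.
  have := psumr_eq0P nonneg eq0 hS.
  move/eqP; rewrite mulf_eq0 (negbTE hl) /= subr_eq0 => /eqP h1.
  have c1 : #|S :&: W| = 1%N.
    by apply/eqP; rewrite -(eqr_nat R) -h1.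
  have [w] : exists w, w \in S :&: W.
    by apply/set0Pn; rewrite -card_gt0 c1.
  rewrite inE => /andP[wS wW].
  have st := (proj1 (stableP _ _ _)) (IHk S hS hl).
  apply/stableP=> u v uS vS; rewrite /clique_proj negb_or (st u v uS vS) /=.
  rewrite negb_and negbK; apply/orP; right; apply/negP=> /subsetP/(_ w wW).
  rewrite !inE => /orP[] hw.
  + by move: (st u w uS wS); rewrite hw.
  + by move: (st v w vS wS); rewrite hw.
have stmono : forall S, stable (proj_seq e (take t Ws)) S -> stable e S.
  move=> S /stableP h; apply/stableP=> u v hu hv; apply/negP=> he.
  by move: (h u v hu hv); rewrite (@proj_mono T (take t Ws) e u v he).
have zero : forall S, stable e S -> ~~ stable (proj_seq e (take t Ws)) S -> lam S = 0.
  move=> S hS hn; apply/eqP; apply/negPn/negP=> hl.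
  by move: hn; rewrite (claim t (leqnn t) S hS hl).
exists lam; split => //; split.
  rewrite (@sum_restrict R T e _ lam stmono) //.
move=> v; rewrite xdef; symmetry; apply: sum_restrict => // S hS hn.
by rewrite (zero S hS hn) mul0r.
Qed.
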